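(* Let $\gamma$ be a screw parabolic isometry of $\mathbb{H}^4$ with fixed point $v$ and twisting plane $P$. Then a plane $Q\subset\mathbb{H}^4$ is orthogonal to $P$ through a line (of $P\cap Q$) having $v$ as an endpoint at infinity if and only if $\partial Q\in\mathcal{K}_\gamma$.
   Context: Identify $\partial\mathbb{H}^4$ with $\widehat{\mathbb{R}^3}$. A screw parabolic isometry $\gamma$ is conjugate, by a Möbius map $\phi$ sending its fixed point $v$ to $\infty$, to the Poincaré extension of $x\mapsto Ax+b$ with $A\in\mathrm{SO}(3)$ nontrivial, $Ab=b$, $b\ne0$. Its rotational part is the conjugate of $x\mapsto Ax$, a type-I elliptic isometry whose fixed plane is the twisting plane $P$ of $\gamma$; $\partial P$ corresponds to the line $\mathbb{R}b\cup\{\infty\}$. The permuted pencil $\mathcal{F}_\gamma$ is the image under $\phi^{-1}$ of the set of Euclidean planes orthogonal to $b$ (with $\infty$ added). The twisting pencil $\mathcal{R}_\gamma$ is the set of boundaries of hyperplanes containing $P$. The half-turn bank is $\mathcal{K}_\gamma=\{s\cap t: s\in\mathcal{F}_\gamma,\ t\in\mathcal{R}_\gamma\}$. *)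

(* Defs.v *)
(* Hyperboloid (Lorentz) model of H^4 in R^{4,1}, with
   light-cone coordinates x = (y, u, w), y in R^3, and quadratic form
   <x,x> = |y|^2 - 2 u w.  The ideal boundary is identified with
   \hat{R^3} = option 'rV_3 (None = infinity) via
     Some y  |->  ray of (y, 1, |y|^2/2),     None |-> ray of (0, 0, 1),
   which is the standard identification making the Poincare extension of a
   Euclidean motion x |-> x A + b a linear Lorentz map (pext below). *)
From HB Require Import structures.
From mathcomp Require Import all_boot all_order all_algebra.
From mathcomp Require Import all_classical all_reals.
Set Implicit Arguments. Unset Strict Implicit. Unset Printing Implicit Defensive.
Import Order.TTheory GRing.Theory Num.Theory.
Local Open Scope ring_scope.
Local Open Scope classical_set_scope.

Section Hyp.
Variable R : realType.

Definition ys (x : 'rV[R]_5) : 'rV[R]_3 := @lsubmx R 1 3 2 x.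
Definition uc (x : 'rV[R]_5) : R := (@rsubmx R 1 3 2 x) 0 ord0.
Definition wc (x : 'rV[R]_5) : R := (@rsubmx R 1 3 2 x) 0 ord_max.
Definition mk (y : 'rV[R]_3) (u w : R) : 'rV[R]_5 :=
  @row_mx R 1 3 2 y (\row_(j < 2) if j == ord0 then u else w).

Definition dot (y z : 'rV[R]_3) : R := (y *m z^T) 0 0.

Definition lform (x z : 'rV[R]_5) : R :=
  dot (ys x) (ys z) - uc x * wc z - wc x * uc z.

Definition H4 : set 'rV[R]_5 := [set x | lform x x = -1 /\ 0 < uc x].

Definition isom (M : 'M[R]_5) : Prop :=
  (forall x z, lform (x *m M) (z *m M) = lform x z) /\
  (forall x, H4 x -> H4 (x *m M)).

Definition bpt (p : option 'rV[R]_3) : 'rV[R]_5 :=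
  match p with
  | None => mk 0 0 1
  | Some y => mk y 1 (dot y y / 2)
  end.

Definition bmap (M : 'M[R]_5) (p q : option 'rV[R]_3) : Prop :=
  exists c : R, 0 < c /\ bpt p *m M = c *: bpt q.

(* Poincare extension of the Euclidean similarity y |-> y *m A + b
   (row-vector convention) *)
Definition pext (A : 'M[R]_3) (b : 'rV[R]_3) (x : 'rV[R]_5) : 'rV[R]_5 :=
  mk (ys x *m A + uc x *: b) (uc x)
     (wc x + dot b (ys x *m A) + uc x * dot b b / 2).

Definition in_span (S : set 'rV[R]_5) (x : 'rV[R]_5) : Prop :=
  exists k (V : 'M[R]_(k, 5)), (forall i, S (row i V)) /\ (x <= V)%MS.

Definition is_kplane (k : nat) (S : set 'rV[R]_5) : Prop :=
  exists V : 'M[R]_(k.+1, 5), \rank V = k.+1 /\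
    S = [set x | H4 x /\ (x <= V)%MS] /\ (exists x, S x).
Definition is_line := is_kplane 1.
Definition is_plane := is_kplane 2.
Definition is_hyperplane := is_kplane 3.

Definition bdry (S : set 'rV[R]_5) : set (option 'rV[R]_3) :=
  [set p | in_span S (bpt p)].

(* two planes P, Q meeting along a line P `&` Q are orthogonal along it:
   the normal directions of the line inside P and inside Q are orthogonal *)
Definition ortho_along (P Q : set 'rV[R]_5) : Prop :=
  forall p q, in_span P p -> in_span Q q ->
    (forall z, (P `&` Q) z -> lform p z = 0) ->
    (forall z, (P `&` Q) z -> lform q z = 0) -> lform p q = 0.

Definition orth_through (P Q : set 'rV[R]_5) (v : option 'rV[R]_3) : Prop :=
  is_line (P `&` Q) /\ bdry (P `&` Q) v /\ ortho_along P Q.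

(* screw parabolic normal form: g (the isometry extending the Moebius map phi)
   sends v to infinity and conjugates gamma to the Poincare extension of
   y |-> y A + b, A in SO(3) nontrivial, A b = b, b <> 0 *)
Definition screw_normal_form (gamma g : 'M[R]_5) (A : 'M[R]_3) (b : 'rV[R]_3)
    (v : option 'rV[R]_3) : Prop :=
  isom gamma /\ isom g /\ (A *m A^T = 1%:M /\ \det A = 1) /\ A != 1%:M /\
  (b *m A = b /\ b != 0) /\ bmap g v None /\
  (forall x, x *m gamma *m g = pext A b (x *m g)).

(* twisting plane: fixed set in H^4 of the rotational part
   g o (Poincare ext. of y |-> y A) o g^-1 *)
Definition twisting_plane (g : 'M[R]_5) (A : 'M[R]_3) : set 'rV[R]_5 :=
  [set x | H4 x /\ pext A 0 (x *m g) = x *m g].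

(* permuted pencil: phi^-1 of the Euclidean planes orthogonal to b, plus oo *)
Definition permuted_pencil (g : 'M[R]_5) (b : 'rV[R]_3)
    : set (set (option 'rV[R]_3)) :=
  [set s | exists c : R, s = [set p | exists q, bmap g p q /\
            (q = None \/ exists y, q = Some y /\ dot y b = c)]].

Definition twisting_pencil (P : set 'rV[R]_5) : set (set (option 'rV[R]_3)) :=
  [set t | exists Hh, is_hyperplane Hh /\ P `<=` Hh /\ t = bdry Hh].

Definition half_turn_bank (g : 'M[R]_5) (A : 'M[R]_3) (b : 'rV[R]_3)
    : set (set (option 'rV[R]_3)) :=
  [set k | exists s t, permuted_pencil g b s /\
     twisting_pencil (twisting_plane g A) t /\ k = s `&` t].

End Hyp.

(* Main.v *)
Require Import Defs.
From mathcomp Require Import all_boot all_order all_algebra.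
From mathcomp Require Import all_classical all_reals.
From mathcomp Require Import ring lra zify.
Set Implicit Arguments. Unset Strict Implicit. Unset Printing Implicit Defensive.
Import Order.TTheory GRing.Theory Num.Theory.
Local Open Scope ring_scope.
Local Open Scope classical_set_scope.

Section Basics.
Variable R : realType.
Implicit Types (x z : 'rV[R]_5) (y : 'rV[R]_3).

Lemma ysE x j : ys x 0 j = x 0 (lshift 2 j). Proof. by rewrite /ys mxE. Qed.
Lemma ucE x : uc x = x 0 (rshift 3 ord0). Proof. by rewrite /uc mxE. Qed.
Lemma wcE x : wc x = x 0 (rshift 3 ord_max). Proof. by rewrite /wc mxE. Qed.

Lemma ysD x z : ys (x + z) = ys x + ys z.
Proof. by apply/rowP=> j; rewrite !mxE. Qed.
Lemma ysZ a x : ys (a *: x) = a *: ys x.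
Proof. by apply/rowP=> j; rewrite !mxE. Qed.
Lemma ucD x z : uc (x + z) = uc x + uc z.
Proof. by rewrite /uc !mxE. Qed.
Lemma ucZ a x : uc (a *: x) = a * uc x.
Proof. by rewrite /uc !mxE. Qed.
Lemma wcD x z : wc (x + z) = wc x + wc z.
Proof. by rewrite /wc !mxE. Qed.
Lemma wcZ a x : wc (a *: x) = a * wc x.
Proof. by rewrite /wc !mxE. Qed.

Lemma ys_mk y u w : ys (mk y u w) = y.
Proof. by rewrite /ys /mk row_mxKl. Qed.
Lemma uc_mk y u w : uc (mk y u w) = u.
Proof. by rewrite /uc /mk row_mxKr mxE. Qed.
Lemma wc_mk y u w : wc (mk y u w) = w.
Proof. by rewrite /wc /mk row_mxKr mxE. Qed.

Lemma mk_eta x : x = mk (ys x) (uc x) (wc x).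
Proof.
rewrite /mk; have := hsubmxK (x : 'M[R]_(1, 3 + 2)).
move=> {1}<-; rewrite /ys.
have -> : rsubmx (x : 'M[R]_(1, 3 + 2)) = \row_j (if j == ord0 then uc x else wc x) :> 'M[R]_(1, 2).
  apply/rowP => j; rewrite mxE.
  case: j => [[|[|//]] Hj].
  - by rewrite /uc; congr (rsubmx (x : 'M[R]_(1, 3 + 2)) 0 _); apply: val_inj.
  - by rewrite /wc; congr (rsubmx (x : 'M[R]_(1, 3 + 2)) 0 _); apply: val_inj.
by [].
Qed.

Lemma ext5 x z : ys x = ys z -> uc x = uc z -> wc x = wc z -> x = z.
Proof. by rewrite (mk_eta x) (mk_eta z) !ys_mk !uc_mk !wc_mk => -> -> ->. Qed.

Lemma ys0 : ys (0 : 'rV[R]_5) = 0. Proof. by apply/rowP=> j; rewrite !mxE. Qed.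
Lemma uc0 : uc (0 : 'rV[R]_5) = 0. Proof. by rewrite /uc !mxE. Qed.
Lemma wc0 : wc (0 : 'rV[R]_5) = 0. Proof. by rewrite /wc !mxE. Qed.
Lemma ysN x : ys (- x) = - ys x. Proof. by apply/rowP=> j; rewrite !mxE. Qed.
Lemma ucN x : uc (- x) = - uc x. Proof. by rewrite /uc !mxE. Qed.
Lemma wcN x : wc (- x) = - wc x. Proof. by rewrite /wc !mxE. Qed.
Lemma ysB x z : ys (x - z) = ys x - ys z. Proof. by rewrite ysD ysN. Qed.
Lemma ucB x z : uc (x - z) = uc x - uc z. Proof. by rewrite ucD ucN. Qed.
Lemma wcB x z : wc (x - z) = wc x - wc z. Proof. by rewrite wcD wcN. Qed.

Definition coordE := (ysD, ysZ, ucD, ucZ, wcD, wcZ, ys_mk, uc_mk, wc_mk,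
  ys0, uc0, wc0, ysN, ucN, wcN).

Lemma mk0 : mk 0 0 0 = 0 :> 'rV[R]_5.
Proof. by apply: ext5; rewrite !coordE. Qed.

Definition i0 : 'I_3 := @Ordinal 3 0 isT.
Definition i1 : 'I_3 := @Ordinal 3 1 isT.
Definition i2 : 'I_3 := @Ordinal 3 2 isT.

Lemma rv3P y y' : y 0 i0 = y' 0 i0 -> y 0 i1 = y' 0 i1 -> y 0 i2 = y' 0 i2 -> y = y'.
Proof.
move=> h0 h1 h2; apply/rowP => j; case: j => [[|[|[|//]]] Hj].
- by rewrite (_ : Ordinal Hj = i0) //; apply: val_inj.
- by rewrite (_ : Ordinal Hj = i1) //; apply: val_inj.
- by rewrite (_ : Ordinal Hj = i2) //; apply: val_inj.
Qed.

Lemma dot3 y y' : dot y y' = y 0 i0 * y' 0 i0 + y 0 i1 * y' 0 i1 + y 0 i2 * y' 0 i2.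
Proof.
rewrite /dot mxE !big_ord_recl big_ord0 !mxE addr0 addrA.
by congr (_ * _ + _ * _ + _ * _); congr (_ 0 _); apply: val_inj.
Qed.

Lemma dotC y y' : dot y y' = dot y' y.
Proof. rewrite !dot3; ring. Qed.
Lemma dotDl y1 y2 y' : dot (y1 + y2) y' = dot y1 y' + dot y2 y'.
Proof. rewrite !dot3 !mxE; ring. Qed.
Lemma dotDr y y1 y2 : dot y (y1 + y2) = dot y y1 + dot y y2.
Proof. rewrite !dot3 !mxE; ring. Qed.
Lemma dotZl a y y' : dot (a *: y) y' = a * dot y y'.
Proof. rewrite !dot3 !mxE; ring. Qed.
Lemma dotZr a y y' : dot y (a *: y') = a * dot y y'.
Proof. rewrite !dot3 !mxE; ring. Qed.
Lemma dotNl y y' : dot (- y) y' = - dot y y'.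
Proof. rewrite !dot3 !mxE; ring. Qed.
Lemma dotNr y y' : dot y (- y') = - dot y y'.
Proof. rewrite !dot3 !mxE; ring. Qed.
Lemma dot0l y : dot 0 y = 0.
Proof. rewrite !dot3 !mxE; ring. Qed.
Lemma dot0r y : dot y 0 = 0.
Proof. rewrite !dot3 !mxE; ring. Qed.
Lemma dot_ge0 y : 0 <= dot y y.
Proof. rewrite dot3; nra. Qed.
Lemma dot_eq0 y : dot y y = 0 -> y = 0.
Proof.
rewrite dot3 => h; apply: rv3P; rewrite mxE; nra.
Qed.
Lemma dot_gt0 y : y != 0 -> 0 < dot y y.
Proof.
move=> hy; rewrite lt_neqAle dot_ge0 andbT; apply/eqP => h.
by move/eqP: hy; apply; apply: dot_eq0.
Qed.

Definition dotE := (dotDl, dotDr, dotZl, dotZr, dotNl, dotNr, dot0l, dot0r).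

Lemma lform_mk y u w y' u' w' :
  lform (mk y u w) (mk y' u' w') = dot y y' - u * w' - w * u'.
Proof. by rewrite /lform !coordE. Qed.

Lemma lformC x z : lform x z = lform z x.
Proof. rewrite /lform dotC; ring. Qed.
Lemma lformDl x1 x2 z : lform (x1 + x2) z = lform x1 z + lform x2 z.
Proof. rewrite /lform !coordE !dotE; ring. Qed.
Lemma lformDr z x1 x2 : lform z (x1 + x2) = lform z x1 + lform z x2.
Proof. rewrite /lform !coordE !dotE; ring. Qed.
Lemma lformZl a x z : lform (a *: x) z = a * lform x z.
Proof. rewrite /lform !coordE !dotE; ring. Qed.
Lemma lformZr a x z : lform z (a *: x) = a * lform z x.
Proof. rewrite /lform !coordE !dotE; ring. Qed.
Lemma lformNl x z : lform (- x) z = - lform x z.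
Proof. rewrite /lform !coordE !dotE; ring. Qed.
Lemma lformNr x z : lform z (- x) = - lform z x.
Proof. rewrite /lform !coordE !dotE; ring. Qed.
Lemma lform0l z : lform 0 z = 0.
Proof. rewrite /lform !coordE !dotE; ring. Qed.
Lemma lform0r z : lform z 0 = 0.
Proof. rewrite /lform !coordE !dotE; ring. Qed.
Definition lformE := (lformDl, lformDr, lformZl, lformZr, lformNl, lformNr, lform0l, lform0r).

End Basics.
Section Isom.
Variable R : realType.
Implicit Types (x z n k : 'rV[R]_5) (y : 'rV[R]_3) (M : 'M[R]_5) (p q : option 'rV[R]_3).

Lemma H4E x : H4 x <-> lform x x = -1 /\ 0 < uc x.
Proof. by []. Qed.

Lemma lform_self x : lform x x = dot (ys x) (ys x) - 2 * uc x * wc x.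
Proof. rewrite /lform; ring. Qed.

Lemma unit_uc_neq0 x : lform x x = -1 -> uc x != 0.
Proof.
rewrite lform_self => h; apply/eqP => h0; move: h; rewrite h0.
have := dot_ge0 (ys x); lra.
Qed.

Lemma H4_pm x : lform x x = -1 -> H4 x \/ H4 (- x).
Proof.
move=> h; have := unit_uc_neq0 h; rewrite neq_lt => /orP [hn|hp].
- right; split; first by rewrite lformNl lformNr opprK.
  by rewrite ucN oppr_gt0.
- by left.
Qed.

Lemma lform_nondeg x : (forall z, lform x z = 0) -> x = 0.
Proof.
move=> h; have h1 := h (mk (ys x) 0 0); have h2 := h (mk 0 1 0); have h3 := h (mk 0 0 1).
move: h1 h2 h3; rewrite /lform !coordE !dotE => h1 h2 h3.
apply: ext5; rewrite !coordE.
- by apply: dot_eq0; lra.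
- lra.
- lra.
Qed.

Lemma isom_unit M : isom M -> M \in unitmx.
Proof.
move=> [hl _]; rewrite -row_free_unit -kermx_eq0; apply/eqP.
apply/row_matrixP => i; rewrite row0.
apply: lform_nondeg => z.
have hk : row i (kermx M) *m M = 0 by rewrite -row_mul mulmx_ker row0.
have -> : lform (row i (kermx M)) z = lform (row i (kermx M) *m M) (z *m M) by rewrite hl.
by rewrite hk lform0l.
Qed.

Lemma isom_inv M : isom M -> isom (invmx M).
Proof.
move=> hM; have hu := isom_unit hM; case: hM => [hl hh]; split.
- by move=> x z; rewrite -hl !mulmxKV.
- move=> x hx.
  have h1 : lform (x *m invmx M) (x *m invmx M) = -1.
    by rewrite -hl mulmxKV //; case: hx.
  case: (H4_pm h1) => // hn.
  have := hh _ hn; rewrite mulNmx mulmxKV // => -[_].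
  by rewrite ucN oppr_gt0; case: hx => _ /[swap] /lt_trans /[apply]; rewrite ltxx.
Qed.

Lemma H4_isomE M x : isom M -> H4 (x *m M) <-> H4 x.
Proof.
move=> hM; split; last by case: hM => _; apply.
move=> h; have := (isom_inv hM).2 _ h; rewrite mulmxK //; exact: isom_unit.
Qed.

Lemma lform_bpt p : lform (bpt p) (bpt p) = 0.
Proof.
case: p => [y|]; rewrite /bpt lform_mk ?dotE; lra.
Qed.

Definition k0 : 'rV[R]_5 := @mk R 0 1 (1/2).
Lemma H4_k0 : H4 k0.
Proof. split; rewrite /k0 ?lform_mk ?coordE ?dotE; lra. Qed.

Lemma bpt_future p k : H4 k -> lform (bpt p) k < 0.
Proof.
case=> hk hu; case: p => [y|]; rewrite /bpt.
- move: hk; rewrite (mk_eta k) !lform_mk => hk.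
  have hsq := dot_ge0 (ys k - uc k *: y); move: hsq; rewrite !dotE => hsq.
  rewrite (dotC (ys k) y) in hsq.
  suff : uc k * (dot y (ys k) - 1 * wc k - dot y y / 2 * uc k) < 0.
    by rewrite pmulr_rlt0.
  nra.
- rewrite (mk_eta k) lform_mk !dotE; nra.
Qed.

Lemma future_of n k : lform n n = 0 -> H4 k -> lform n k < 0 ->
  0 < uc n \/ (uc n = 0 /\ ys n = 0 /\ 0 < wc n).
Proof.
move=> hn [hk hu] hl.
case: (ltgtP (uc n) 0) => ha; last 1 first.
- right; have hz : ys n = 0.
    by apply: dot_eq0; move: hn; rewrite lform_self ha; lra.
  split => //; split => //.
  move: hl; rewrite /lform hz ha dot0l; nra.
- exfalso.
  move: hn hk hl; rewrite !lform_self /lform.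
  move=> hn hk hl.
  have hsq := dot_ge0 ((- uc n) *: ys k + uc k *: ys n).
  move: hsq; rewrite !dotE (dotC (ys k) (ys n)) => hsq.
  have hP : 0 < - uc n * uc k by nra.
  have hPL : - uc n * uc k * (dot (ys n) (ys k) - uc n * wc k - wc n * uc k) < 0.
    by rewrite pmulr_rlt0.
  have e1 : uc n ^+ 2 * (dot (ys k) (ys k) - 2 * uc k * wc k) = uc n ^+ 2 * (-1) by rewrite hk.
  have e2 : uc k ^+ 2 * (dot (ys n) (ys n) - 2 * uc n * wc n) = 0 by rewrite hn mulr0.
  have ha2 : 0 < uc n ^+ 2 by rewrite exprn_even_gt0 //= lt_eqF.
  nra.
- by left.
Qed.

Lemma bmap_ex M p : isom M -> exists q, bmap M p q.
Proof.
move=> hM; set n := bpt p *m M.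
have hn : lform n n = 0 by rewrite /n hM.1 lform_bpt.
have hk := hM.2 _ H4_k0.
have hl : lform n (k0 *m M) < 0 by rewrite /n hM.1; apply: bpt_future; exact: H4_k0.
case: (future_of hn hk hl) => [hu | [hu [hy hw]]].
- have hu0 : uc n != 0 by rewrite gt_eqF.
  exists (Some ((uc n)^-1 *: ys n)); exists (uc n); split => //.
  rewrite -/n; apply: ext5; rewrite /bpt !coordE ?dotE.
  + by rewrite scalerA divff ?scale1r.
  + by rewrite mulr1.
  + move: hn; rewrite lform_self => hn.
    have hd : dot (ys n) (ys n) = 2 * uc n * wc n by lra.
    by rewrite hd; field.
- exists (None : option 'rV[R]_3); exists (wc n); split => //.
  rewrite -/n; apply: ext5; rewrite /bpt !coordE ?hy ?hu; rewrite ?scaler0 //; ring.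
Qed.

End Isom.
Arguments k0 {R}. Arguments H4_k0 {R}.
Section Mxl.
Variable R : realType.
Variable n : nat.
Implicit Types (x z : 'rV[R]_n).

Definition mxl k (F : seq 'rV[R]_n) : 'M[R]_(k, n) := \matrix_(i < k) nth 0 F i.

Lemma row_mxl k F (i : 'I_k) : row i (mxl k F) = nth 0 F i.
Proof. by rewrite rowK. Qed.

Lemma sub_mxlP k F z :
  (z <= mxl k F)%MS <-> exists c : 'rV[R]_k, z = \sum_(i < k) c 0 i *: nth 0 F i.
Proof.
split.
- move/submxP => [D ->]; exists D; rewrite mulmx_sum_row.
  by apply: eq_bigr => i _; rewrite row_mxl.
- move=> [c ->]; apply/submxP; exists c; rewrite mulmx_sum_row.
  by apply: eq_bigr => i _; rewrite row_mxl.
Qed.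

Lemma rank_mxl k F :
  (forall c : 'rV[R]_k, \sum_(i < k) c 0 i *: nth 0 F i = 0 -> c = 0) ->
  \rank (mxl k F) = k.
Proof.
move=> hind; apply/eqP; rewrite -/(row_free _) -kermx_eq0; apply/eqP.
apply/row_matrixP => i; rewrite row0; apply: hind.
have := mulmx_ker (mxl k F); move/(congr1 (row i)); rewrite row_mul row0.
rewrite mulmx_sum_row => hs; rewrite -[RHS]hs.
by apply: eq_bigr => j _; rewrite row_mxl.
Qed.

Lemma sub_mx2P a1 a2 z :
  (z <= mxl 2 [:: a1; a2])%MS <-> exists c1 c2, z = c1 *: a1 + c2 *: a2.
Proof.
rewrite sub_mxlP; split.
- by move=> [c ->]; exists (c 0 ord0), (c 0 (lift ord0 ord0)); rewrite !big_ord_recl big_ord0 addr0.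
- move=> [c1 [c2 ->]]; exists (\row_(i < 2) nth 0 [:: c1; c2] i).
  by rewrite !big_ord_recl big_ord0 addr0 !mxE.
Qed.

Lemma sub_mx3P a1 a2 a3 z :
  (z <= mxl 3 [:: a1; a2; a3])%MS <->
  exists c1 c2 c3, z = c1 *: a1 + c2 *: a2 + c3 *: a3.
Proof.
rewrite sub_mxlP; split.
- move=> [c ->]; exists (c 0 ord0), (c 0 (lift ord0 ord0)), (c 0 (lift ord0 (lift ord0 ord0))).
  by rewrite !big_ord_recl big_ord0 addr0 addrA.
- move=> [c1 [c2 [c3 ->]]]; exists (\row_(i < 3) nth 0 [:: c1; c2; c3] i).
  by rewrite !big_ord_recl big_ord0 addr0 !mxE addrA.
Qed.

Lemma sub_mx4P a1 a2 a3 a4 z :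
  (z <= mxl 4 [:: a1; a2; a3; a4])%MS <->
  exists c1 c2 c3 c4, z = c1 *: a1 + c2 *: a2 + c3 *: a3 + c4 *: a4.
Proof.
rewrite sub_mxlP; split.
- move=> [c ->]; exists (c 0 ord0), (c 0 (lift ord0 ord0)), (c 0 (lift ord0 (lift ord0 ord0))), (c 0 (lift ord0 (lift ord0 (lift ord0 ord0)))).
  by rewrite !big_ord_recl big_ord0 addr0 !addrA.
- move=> [c1 [c2 [c3 [c4 ->]]]]; exists (\row_(i < 4) nth 0 [:: c1; c2; c3; c4] i).
  by rewrite !big_ord_recl big_ord0 addr0 !mxE !addrA.
Qed.

Lemma rank_mx2 a1 a2 :
  (forall c1 c2, c1 *: a1 + c2 *: a2 = 0 -> c1 = 0 /\ c2 = 0) ->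
  \rank (mxl 2 [:: a1; a2]) = 2%N.
Proof.
move=> h; apply: rank_mxl => c; rewrite !big_ord_recl big_ord0 addr0 => /h [h1 h2].
apply/rowP => i; rewrite mxE; case: i => [[|[|//]] Hi].
- by rewrite -h1; congr (c 0 _); apply: val_inj.
- by rewrite -h2; congr (c 0 _); apply: val_inj.
Qed.

Lemma rank_mx3 a1 a2 a3 :
  (forall c1 c2 c3, c1 *: a1 + c2 *: a2 + c3 *: a3 = 0 -> [/\ c1 = 0, c2 = 0 & c3 = 0]) ->
  \rank (mxl 3 [:: a1; a2; a3]) = 3%N.
Proof.
move=> h; apply: rank_mxl => c; rewrite !big_ord_recl big_ord0 addr0 addrA => /h [h1 h2 h3].
apply/rowP => i; rewrite mxE; case: i => [[|[|[|//]]] Hi].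
- by rewrite -h1; congr (c 0 _); apply: val_inj.
- by rewrite -h2; congr (c 0 _); apply: val_inj.
- by rewrite -h3; congr (c 0 _); apply: val_inj.
Qed.

Lemma rank_mx4 a1 a2 a3 a4 :
  (forall c1 c2 c3 c4, c1 *: a1 + c2 *: a2 + c3 *: a3 + c4 *: a4 = 0 ->
     [/\ c1 = 0, c2 = 0, c3 = 0 & c4 = 0]) ->
  \rank (mxl 4 [:: a1; a2; a3; a4]) = 4%N.
Proof.
move=> h; apply: rank_mxl => c; rewrite !big_ord_recl big_ord0 addr0 !addrA => /h [h1 h2 h3 h4].
apply/rowP => i; rewrite mxE; case: i => [[|[|[|[|//]]]] Hi].
- by rewrite -h1; congr (c 0 _); apply: val_inj.
- by rewrite -h2; congr (c 0 _); apply: val_inj.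
- by rewrite -h3; congr (c 0 _); apply: val_inj.
- by rewrite -h4; congr (c 0 _); apply: val_inj.
Qed.

End Mxl.
Section Span.
Variable R : realType.
Implicit Types (x z h : 'rV[R]_5) (Z : 'rV[R]_5 -> Prop) (S : set 'rV[R]_5).

Definition lin Z := Z 0 /\ (forall a x z, Z x -> Z z -> Z (a *: x + z)).

Lemma linZ Z a x : lin Z -> Z x -> Z (a *: x).
Proof. by move=> [h0 h] hx; rewrite -[_ *: _]addr0; apply: h. Qed.
Lemma linD Z x z : lin Z -> Z x -> Z z -> Z (x + z).
Proof. by move=> [h0 h] hx hz; rewrite -[x]scale1r; apply: h. Qed.
Lemma linN Z x : lin Z -> Z x -> Z (- x).
Proof. by move=> hl hx; rewrite -scaleN1r; apply: linZ. Qed.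
Lemma linB Z x z : lin Z -> Z x -> Z z -> Z (x - z).
Proof. by move=> hl hx hz; apply: linD => //; apply: linN. Qed.

Lemma lin_sum Z k (c : 'I_k -> R) (F : 'I_k -> 'rV[R]_5) :
  lin Z -> (forall i, Z (F i)) -> Z (\sum_(i < k) c i *: F i).
Proof.
move=> hl hF; apply: (big_rec (fun v => Z v)); first by case: hl.
by move=> i v _ hv; apply: (hl.2 _ _ _ (hF i) hv).
Qed.

Lemma lin_sub m (M : 'M[R]_(m, 5)) : lin (fun x => (x <= M)%MS).
Proof.
split; first exact: sub0mx.
by move=> a x z hx hz; rewrite addmx_sub // scalemx_sub.
Qed.

Lemma lin_and Z1 Z2 : lin Z1 -> lin Z2 -> lin (fun x => Z1 x /\ Z2 x).
Proof.
move=> [a0 a] [b0 b]; split => // c x z [h1 h2] [h3 h4]; split; [exact: a | exact: b].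
Qed.

Lemma lin_pre Z (M : 'M[R]_5) : lin Z -> lin (fun x => Z (x *m M)).
Proof.
move=> [h0 h]; split; first by rewrite mul0mx.
by move=> a x z hx hz; rewrite mulmxDl -scalemxAl; apply: h.
Qed.

Lemma in_spanS S S' x : S `<=` S' -> in_span S x -> in_span S' x.
Proof. by move=> hS [k [V [hV hx]]]; exists k, V; split => // i; apply: hS. Qed.

Lemma span_char Z : lin Z -> (exists h, H4 h /\ Z h) ->
  forall x, in_span [set x | H4 x /\ Z x] x <-> Z x.
Proof.
move=> hl [h [hh hZh]] x; split.
- move=> [k [V [hV /submxP [D ->]]]]; rewrite mulmx_sum_row.
  by apply: lin_sum => // i; case: (hV i).
- move=> hZx.
  set a := lform x h; set c0 := lform x x.
  set lam := `|c0| + 2 * `|a| + 1.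
  have hlam1 : 1 <= lam by rewrite /lam; have := normr_ge0 c0; have := normr_ge0 a; lra.
  set z2 := x + lam *: h.
  have hq : lform z2 z2 = c0 + 2 * lam * a - lam ^+ 2.
    rewrite /z2 !lformE -/a -/c0 (lformC h x) -/a; case: hh => -> _; ring.
  have hneg : lform z2 z2 < 0.
    rewrite hq; have ha := ler_norm a; have hc := ler_norm c0.
    have hna := ler_normr a; have hnc := normr_ge0 c0.
    have hlE : lam = `|c0| + 2 * `|a| + 1 by [].
    have e1 : 0 <= (lam - 1) * `|c0| by apply: mulr_ge0; lra.
    have e2 : 0 <= lam * (`|a| - a) by apply: mulr_ge0; lra.
    rewrite hlE in e1 e2 *; nra.
  set s := Num.sqrt (- lform z2 z2).
  have hs : 0 < s by rewrite /s sqrtr_gt0 oppr_gt0.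
  have hs2 : s ^+ 2 = - lform z2 z2 by rewrite /s sqr_sqrtr // oppr_ge0 ltW.
  set z3 := s^-1 *: z2.
  have hz3 : lform z3 z3 = -1.
    rewrite /z3 lformZl lformZr.
    have -> : lform z2 z2 = - s ^+ 2 by rewrite hs2 opprK.
    field; apply: lt0r_neq0; lra.
  have hZ3 : Z z3 by apply: linZ => //; apply: linD => //; apply: linZ.
  have [w [hw hZw hwe]] : exists w, [/\ H4 w, Z w & exists eps : R, z3 = eps *: w].
    case: (H4_pm hz3) => hw.
    - by exists z3; split => //; exists 1; rewrite scale1r.
    - exists (- z3); split => //; first exact: linN.
      by exists (-1); rewrite scaleN1r opprK.
  case: hwe => eps he.
  exists 2%N, (mxl 2 [:: h; w]); split.
  + move=> i; rewrite row_mxl; case: i => [[|[|//]] Hi] /=; by split.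
  + apply/sub_mx2P; exists (- lam), (s * eps).
    rewrite -scalerA -he /z3 scalerA divff ?scale1r; last exact: lt0r_neq0.
    by rewrite /z2 scaleNr addrC -addrA subrr addr0.
Qed.

Lemma kplane_span m S (V : 'M[R]_(m, 5)) : S = [set x | H4 x /\ (x <= V)%MS] -> (exists x, S x) ->
  forall x, in_span S x <-> (x <= V)%MS.
Proof.
move=> hS [x0 hx0]; rewrite hS; apply: span_char; first exact: lin_sub.
by exists x0; move: hx0; rewrite hS.
Qed.

End Span.
Section ThreeD.
Variable R : realType.
Implicit Types (y z w b m : 'rV[R]_3) (A : 'M[R]_3).

Definition cross b y : 'rV[R]_3 :=
  \row_(j < 3) nth 0 [:: b 0 i1 * y 0 i2 - b 0 i2 * y 0 i1;
                        b 0 i2 * y 0 i0 - b 0 i0 * y 0 i2;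
                        b 0 i0 * y 0 i1 - b 0 i1 * y 0 i0] j.

Lemma cross0 b y : cross b y 0 i0 = b 0 i1 * y 0 i2 - b 0 i2 * y 0 i1.
Proof. by rewrite mxE. Qed.
Lemma cross1 b y : cross b y 0 i1 = b 0 i2 * y 0 i0 - b 0 i0 * y 0 i2.
Proof. by rewrite mxE. Qed.
Lemma cross2 b y : cross b y 0 i2 = b 0 i0 * y 0 i1 - b 0 i1 * y 0 i0.
Proof. by rewrite mxE. Qed.

Lemma dot_cross_l b y : dot b (cross b y) = 0.
Proof. by rewrite dot3 cross0 cross1 cross2; ring. Qed.
Lemma dot_cross_r b y : dot y (cross b y) = 0.
Proof. by rewrite dot3 cross0 cross1 cross2; ring. Qed.
Lemma lagrange b y : dot (cross b y) (cross b y) = dot b b * dot y y - dot b y ^+ 2.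
Proof. by rewrite !dot3 cross0 cross1 cross2; ring. Qed.

Lemma gram b y w :
  dot (cross b y) (cross b y) *: w =
  (dot w b * dot y y - dot w y * dot b y) *: b +
  (dot w y * dot b b - dot w b * dot b y) *: y + dot w (cross b y) *: cross b y.
Proof.
apply: rv3P; rewrite !mxE !dot3 !cross0 !cross1 !cross2 /=; ring.
Qed.

Lemma perp_decomp b y w : dot b y = 0 -> b != 0 -> y != 0 ->
  dot w (cross b y) = 0 ->
  w = (dot w b / dot b b) *: b + (dot w y / dot y y) *: y.
Proof.
move=> hby hb hy hw; have hb2 := dot_gt0 hb; have hy2 := dot_gt0 hy.
have hg := gram b y w; rewrite lagrange hby hw scale0r addr0 in hg.
have hn : dot b b * dot y y - 0 ^+ 2 != 0.
  by rewrite expr0n /= subr0 mulf_neq0 // lt0r_neq0.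
apply: (scalerI hn); rewrite hg scalerDr !scalerA.
have hb0 := lt0r_neq0 hb2; have hy0 := lt0r_neq0 hy2.
congr (_ *: _ + _ *: _); by field.
Qed.

Lemma perp_line b y w : dot b y = 0 -> b != 0 -> y != 0 ->
  dot w b = 0 -> dot w y = 0 ->
  w = (dot w (cross b y) / dot (cross b y) (cross b y)) *: cross b y.
Proof.
move=> hby hb hy hwb hwy; have hb2 := dot_gt0 hb; have hy2 := dot_gt0 hy.
have hm : 0 < dot (cross b y) (cross b y).
  by rewrite lagrange hby expr0n /= subr0 mulr_gt0.
have hg := gram b y w; rewrite hwb hwy !mul0r subrr !scale0r !add0r in hg.
have hm0 := lt0r_neq0 hm.
apply: (scalerI hm0); rewrite hg scalerA; congr (_ *: _); by field.
Qed.

Lemma dotM b y A : A *m A^T = 1%:M -> dot (b *m A) (y *m A) = dot b y.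
Proof.
move=> hA; rewrite /dot trmx_mul mulmxA -(mulmxA b) hA mulmx1 //.
Qed.

Lemma fixed_axis A b y : A *m A^T = 1%:M -> \det A = 1 -> A != 1%:M ->
  b *m A = b -> b != 0 -> y *m A = y -> exists lam, y = lam *: b.
Proof.
move=> hA hdet hA1 hbA hb hyA.
have hb2 := dot_gt0 hb.
set z := y - (dot y b / dot b b) *: b.
have hzA : z *m A = z by rewrite /z mulmxBl -scalemxAl hbA hyA.
have hzb : dot b z = 0.
  rewrite /z !dotE (dotC b y); field; exact: lt0r_neq0.
have [z0|hz] := eqVneq z 0.
  by exists (dot y b / dot b b); apply/eqP; rewrite -subr_eq0 -/z z0.
exfalso; move/eqP: hA1; apply.
clearbody z.
have hz2 := dot_gt0 hz.
set m := cross b z.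
have hmb : dot b m = 0 by exact: dot_cross_l.
have hmz : dot z m = 0 by exact: dot_cross_r.
have hm : 0 < dot m m by rewrite lagrange hzb expr0n /= subr0 mulr_gt0.
set mA := m *m A.
have hmAb : dot mA b = 0.
  have -> : dot mA b = dot (m *m A) (b *m A) by rewrite hbA.
  by rewrite dotM // dotC dot_cross_l.
have hmAz : dot mA z = 0.
  have -> : dot mA z = dot (m *m A) (z *m A) by rewrite hzA.
  by rewrite dotM // dotC dot_cross_r.
set mu := dot mA m / dot m m.
have hmu : mA = mu *: m by exact: (perp_line hzb hb hz hmAb hmAz).
have hmAe : m *m A = mu *: m := hmu.
clearbody mu mA m.
have hmu2 : mu ^+ 2 = 1.
  have := dotM m m hA; rewrite hmAe !dotE => h.
  apply: (mulIf (lt0r_neq0 hm)); rewrite mul1r expr2 -mulrA; exact: h.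
set B := mxl 3 [:: b; z; m].
have hind : \rank B = 3%N.
  apply: rank_mx3 => c1 c2 c3 h0.
  have e1 := congr1 (dot b) h0; have e2 := congr1 (dot z) h0;
    have e3 := congr1 (dot m) h0.
  move: e1 e2 e3; rewrite !dotE (dotC z b) hzb (dotC m b) (dotC m z) hmb hmz.
  rewrite !mulr0 !addr0 !add0r.
  move=> e1 e2 e3; split.
  - by apply: (mulIf (lt0r_neq0 hb2)); rewrite mul0r -e1 mulrC.
  - by apply: (mulIf (lt0r_neq0 hz2)); rewrite mul0r -e2 mulrC.
  - by apply: (mulIf (lt0r_neq0 hm)); rewrite mul0r -e3 mulrC.
have hBu : B \in unitmx by rewrite -row_free_unit /row_free hind.
set d : 'rV[R]_3 := \row_(j < 3) nth 0 [:: 1; 1; mu] j.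
have hBA : B *m A = diag_mx d *m B.
  apply/row_matrixP => i; rewrite row_mul row_mxl mul_diag_mx.
  case: i => [[|[|[|//]]] Hi] /=.
  - by rewrite hbA; apply/rowP => j; rewrite !mxE /= mul1r.
  - by rewrite hzA; apply/rowP => j; rewrite !mxE /= mul1r.
  - by rewrite hmAe; apply/rowP => j; rewrite !mxE.
have hdB : \det B != 0.
  by move: hBu; rewrite unitmxE unitfE.
have hmu1 : mu = 1.
  have := congr1 determinant hBA; rewrite !det_mulmx hdet mulr1 det_diag.
  rewrite !big_ord_recl big_ord0 !mxE /= !mul1r mulr1 => h.
  by apply: (mulIf hdB); rewrite mul1r -h.
have hBA1 : B *m A = B.
  apply/row_matrixP => i; rewrite row_mul !row_mxl.
  case: i => [[|[|[|//]]] Hi] /=.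
  - by rewrite hbA.
  - by rewrite hzA.
  - by rewrite hmAe hmu1 scale1r.
by rewrite -[A]mul1mx -(mulVmx hBu) -mulmxA hBA1 mulVmx.
Qed.


End ThreeD.
Section Main.
Variable R : realType.
Variables (g : 'M[R]_5) (A : 'M[R]_3) (b : 'rV[R]_3).
Hypothesis hg : isom g.
Hypothesis hA : A *m A^T = 1%:M.
Hypothesis hdet : \det A = 1.
Hypothesis hA1 : A != 1%:M.
Hypothesis hbA : b *m A = b.
Hypothesis hb : b != 0.
Implicit Types (x z : 'rV[R]_5) (y : 'rV[R]_3) (p q : option 'rV[R]_3).

Let gi := invmx g.
Let hgu : g \in unitmx := isom_unit hg.
Let hgf : row_free g. Proof. by rewrite row_free_unit. Qed.
Let hgif : row_free gi. Proof. by rewrite row_free_unit unitmx_inv. Qed.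
Let hgi : isom gi := isom_inv hg.

Lemma ggi x : x *m gi *m g = x. Proof. exact: mulmxKV. Qed.
Lemma gig x : x *m g *m gi = x. Proof. exact: mulmxK. Qed.

Lemma subgi m (M : 'M[R]_(m, 5)) x : (x <= M *m gi)%MS <-> (x *m g <= M)%MS.
Proof. by rewrite -(submxMfree _ _ hgf) mulmxKV. Qed.

Lemma subg m (M : 'M[R]_(m, 5)) x : (x <= M)%MS <-> (x *m g <= M *m g)%MS.
Proof. by rewrite (submxMfree _ _ hgf). Qed.

Lemma rankgi m (M : 'M[R]_(m, 5)) : \rank (M *m gi) = \rank M.
Proof. exact: mxrankMfree. Qed.
Lemma rankg m (M : 'M[R]_(m, 5)) : \rank (M *m g) = \rank M.
Proof. exact: mxrankMfree. Qed.

Lemma H4g x : H4 (x *m g) <-> H4 x. Proof. exact: H4_isomE. Qed.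
Lemma H4gi z : H4 (z *m gi) <-> H4 z. Proof. exact: H4_isomE. Qed.
Lemma lformg x z : lform (x *m g) (z *m g) = lform x z. Proof. exact: hg.1. Qed.
Lemma lformgi x z : lform (x *m gi) (z *m gi) = lform x z. Proof. exact: hgi.1. Qed.

Definition E0 : 'rV[R]_5 := mk 0 0 1.
Definition E1 : 'rV[R]_5 := mk 0 1 0.
Definition B0 : 'rV[R]_5 := mk b 0 0.
Definition Pi z := exists lam, ys z = lam *: b.

Lemma PiE z : Pi z <-> (z <= mxl 3 [:: B0; E1; E0])%MS.
Proof.
rewrite sub_mx3P; split.
- move=> [lam hl]; exists lam, (uc z), (wc z).
  by apply: ext5; rewrite /B0 /E1 /E0 !coordE ?hl; rewrite ?scaler0 ?addr0 //; ring.
- by move=> [c1 [c2 [c3 ->]]]; exists c1; rewrite /B0 /E1 /E0 !coordE !scaler0 !addr0.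
Qed.

Lemma lin_Pi : lin Pi.
Proof.
have -> : Pi = (fun z => (z <= mxl 3 [:: B0; E1; E0])%MS).
  by apply: funext => z; apply: propext; exact: PiE.
exact: lin_sub.
Qed.

Lemma Pi_k0 : Pi k0. Proof. by exists 0; rewrite /k0 ys_mk scale0r. Qed.

Lemma pext_fix z : pext A 0 z = z <-> ys z *m A = ys z.
Proof.
rewrite /pext; split => [h | h].
- by rewrite -{2}h ys_mk scaler0 addr0.
- apply: ext5; rewrite !coordE ?scaler0 ?addr0 // !dot3 !mxE; ring.
Qed.

Lemma twistE : twisting_plane g A = [set x | H4 x /\ Pi (x *m g)].
Proof.
apply: funext => x; apply: propext; rewrite /twisting_plane /=.
split => -[hx h]; split => //.
- by move/pext_fix: h => h; apply: (fixed_axis hA hdet hA1 hbA hb h).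
- apply/pext_fix; case: h => lam ->; by rewrite -scalemxAl hbA.
Qed.

Lemma span_twist x : in_span (twisting_plane g A) x <-> Pi (x *m g).
Proof.
rewrite twistE; apply: (span_char (Z := fun x => Pi (x *m g))).
- exact: lin_pre lin_Pi.
- exists (k0 *m gi); split; first by apply/H4gi; exact: H4_k0.
  by rewrite ggi; exact: Pi_k0.
Qed.

Lemma bmap_surj q : exists p (k : R), 0 < k /\ bpt p *m g = k *: bpt q.
Proof.
have [p [k [hk he]]] := bmap_ex q hgi.
exists p, k^-1; split; first by rewrite invr_gt0.
have := congr1 (fun v => k^-1 *: (v *m g)) he.
by rewrite /= ggi -scalemxAl scalerA mulVf ?scale1r // lt0r_neq0.
Qed.

Lemma pencilE c p :
  [set p | exists q, bmap g p q /\ (q = None \/ exists y, q = Some y /\ dot y b = c)] p <->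
  dot (ys (bpt p *m g)) b = c * uc (bpt p *m g).
Proof.
split.
- move=> [q [[k [hk ->]] hq]]; case: hq => [-> | [y [-> hy]]].
  + by rewrite /bpt !coordE !dot3 !mxE; ring.
  + by rewrite /bpt !coordE dotZl hy mulr1 mulrC.
- move=> h; have [q [k [hk he]]] := bmap_ex p hg.
  exists q; split; first by exists k.
  move: h; rewrite he; case: q he => [y|] he h; last by left.
  right; exists y; split => //; move: h; rewrite /bpt !coordE dotZl mulr1 mulrC.
  by move/(mulIf (lt0r_neq0 hk)).
Qed.

Lemma kplane_mk k (F : seq 'rV[R]_5) :
  \rank (mxl k.+1 F) = k.+1 -> (exists z, H4 z /\ (z <= mxl k.+1 F)%MS) ->
  is_kplane k [set x | H4 x /\ (x *m g <= mxl k.+1 F)%MS].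
Proof.
move=> hr [z [hz hzs]]; exists (mxl k.+1 F *m gi); split; first by rewrite rankgi.
split.
- apply: funext => x; apply: propext => /=.
  by split => -[h1 h2]; split => //; apply/subgi.
- by exists (z *m gi); split; [apply/H4gi | rewrite ggi].
Qed.

Lemma in_span_g k S (V : 'M[R]_(k, 5)) x : S = [set x | H4 x /\ (x <= V)%MS] -> (exists x, S x) ->
  in_span S x <-> (x *m g <= V *m g)%MS.
Proof. by move=> hS hne; rewrite (kplane_span hS hne) subg. Qed.


Lemma span_pre (S : set 'rV[R]_5) m (M : 'M[R]_(m, 5)) :
  S = [set x | H4 x /\ (x *m g <= M)%MS] -> (exists x, S x) ->
  forall x, in_span S x <-> (x *m g <= M)%MS.
Proof.
move=> -> hne; apply: span_char; first exact: lin_pre (lin_sub M).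
by case: hne => x hx; exists x.
Qed.

Lemma k0_mx4 y : (k0 <= mxl 4 [:: B0; mk y 0 0; E1; E0])%MS.
Proof.
apply/sub_mx4P; exists 0, 0, 1, (1/2).
apply: ext5; rewrite /k0 /B0 /E1 /E0 !coordE ?scale0r ?scaler0 ?addr0 ?add0r; first done; ring.
Qed.

Lemma sc0 (a : R) : a *: (0 : 'rV[R]_3) = 0.
Proof. by apply/rowP => i; rewrite !mxE mulr0. Qed.

Lemma forward (v : option 'rV[R]_3) (Q : set 'rV[R]_5) :
  bmap g v None -> is_plane Q -> orth_through (twisting_plane g A) Q v ->
  half_turn_bank g A b (bdry Q).
Proof.
move=> hv [VQ [hrQ [hQ hQne]]] [[L [hrL [hPQ hPQne]]] [hbv hort]].
set P := twisting_plane g A.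
set W := VQ *m g.
have hrW : \rank W = 3%N by rewrite rankg.
have spQ : forall x, in_span Q x <-> (x *m g <= W)%MS := fun x => in_span_g x hQ hQne.
have PQE : P `&` Q = [set x | H4 x /\ (Pi (x *m g) /\ (x *m g <= W)%MS)].
  apply: funext => x; apply: propext; rewrite /P twistE hQ /=.
  split.
  - by move=> [[h1 h2] [_ h4]]; split => //; split => //; rewrite -subg.
  - by move=> [h1 [h2 h3]]; split; split => //; rewrite subg.
have linPQ : lin (fun x => Pi (x *m g) /\ (x *m g <= W)%MS).
  exact: lin_and (lin_pre _ lin_Pi) (lin_pre _ (lin_sub W)).
have KE : forall x, (x <= L)%MS <-> Pi (x *m g) /\ (x *m g <= W)%MS.
  move=> x; have e1 := kplane_span hPQ hPQne x.
  have hne' : exists h, H4 h /\ (Pi (h *m g) /\ (h *m g <= W)%MS).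
    by case: hPQne => h; rewrite PQE => hh; exists h.
  have e2 := span_char linPQ hne' x.
  by rewrite -PQE in e2; rewrite -e1 e2.
have hE0 : (E0 <= W)%MS.
  have := (kplane_span hPQ hPQne (bpt v)).1 hbv; rewrite KE => -[_].
  case: hv => k [hk ->]; rewrite /bpt -/E0 => h.
  by rewrite -(scale1r E0) -(mulVf (lt0r_neq0 hk)) -scalerA scalemx_sub.
have PiE0 : Pi E0 by exists 0; rewrite /E0 ys_mk scale0r.
case: hPQne => h; rewrite PQE => -[hh [[lam hlam] hhW]].
set hh' := h *m g.
have hu : 0 < uc hh' by case: (H4g h).2 => // _.
set t := lam / uc hh'.
set f : 'rV[R]_5 := mk (t *: b) 1 0.
have hf : f = (uc hh')^-1 *: (hh' - wc hh' *: E0).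
  have hu0 := lt0r_neq0 hu.
  apply: ext5; rewrite /f /E0 !coordE ?hlam ?scaler0 ?subr0.
  - by rewrite scalerA mulrC.
  - by rewrite mulr0 subr0 mulVf.
  - by rewrite mulr1 subrr mulr0.
have hfW : (f <= W)%MS.
  rewrite hf; apply: scalemx_sub; apply: (linB (lin_sub W)) => //.
  exact: linZ _ (lin_sub W) hE0.
have Pif : Pi f by exists t; rewrite /f ys_mk.
have C1 : forall z, Pi z -> (z <= W)%MS -> z = wc z *: E0 + uc z *: f.
  move=> z [mu hmu] hzW.
  have [hd|hd] := eqVneq (mu - uc z * t) 0.
    apply: ext5; rewrite /E0 /f !coordE ?sc0 ?mulr0 ?mulr1 ?add0r ?addr0 //.
    by rewrite hmu scalerA; congr (_ *: _); lra.
  exfalso.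
  set r0 := z - wc z *: E0 - uc z *: f.
  have hr0 : r0 = (mu - uc z * t) *: B0.
    apply: ext5; rewrite /r0 /E0 /f /B0 !coordE ?sc0 ?scaler0 ?mulr0 ?mulr1 ?subr0 //.
    + by rewrite hmu scalerA scalerBl.
    + by rewrite subrr.
    + by rewrite subrr.
  have hB0W : (B0 <= W)%MS.
    rewrite -(scale1r B0) -(mulVf hd) -scalerA -hr0; apply: scalemx_sub.
    apply: (linB (lin_sub W)); first apply: (linB (lin_sub W)) => //.
    - exact: linZ _ (lin_sub W) hE0.
    - exact: linZ _ (lin_sub W) hfW.
  have PiB0 : Pi B0 by exists 1; rewrite /B0 ys_mk scale1r.
  have hsub : (mxl 3 [:: E0; f; B0] *m gi <= L)%MS.
    apply/row_subP => i; rewrite row_mul row_mxl; apply/KE; rewrite ggi.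
    by case: i => [[|[|[|//]]] Hi] /=.
  have := mxrankS hsub; rewrite rankgi hrL.
  rewrite (@rank_mx3 _ _ E0 f B0) //.
  move=> c1 c2 c3 h0; have := congr1 (@uc R) h0; have := congr1 (@wc R) h0; have := congr1 (@ys R) h0.
  rewrite /E0 /f /B0 !coordE ?scaler0 ?mulr0 ?mulr1 ?add0r ?addr0 => hy hw huu.
  move: hy; rewrite hw huu scale0r add0r => /eqP; rewrite scaler_eq0 (negbTE hb) orbF => /eqP.
  by [].
set p' : 'rV[R]_5 := mk b 0 (t * dot b b).
have Pip' : Pi p' by exists 1; rewrite /p' ys_mk scale1r.
have orth_line : forall w, lform w E0 = 0 -> lform w f = 0 ->
    forall z, (P `&` Q) z -> lform (w *m gi) z = 0.
  move=> w h1 h2 z; rewrite PQE => -[_ [hPz hWz]].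
  rewrite -lformg ggi (C1 _ hPz hWz) !lformE h1 h2; ring.
have hp1 : lform p' E0 = 0 by rewrite /p' /E0 lform_mk !dotE; ring.
have hp2 : lform p' f = 0 by rewrite /p' /f lform_mk !dotE; ring.
have : ~~ (W <= mxl 2 [:: E0; f])%MS.
  apply/negP => hs; have := mxrankS hs; rewrite hrW.
  have := rank_leq_row (mxl 2 [:: E0; f]); lia.
move/row_subPn => [i hi].
set r := row i W.
have hrW' : (r <= W)%MS := row_sub i W.
set yv := ys r - uc r *: (t *: b).
set q1 : 'rV[R]_5 := mk yv 0 (t * dot yv b).
have hq1 : q1 = r - uc r *: f - wc r *: E0 + (t * dot yv b) *: E0.
  apply: ext5; rewrite /q1 /f /E0 !coordE ?sc0 ?mulr0 ?mulr1 ?subr0 ?addr0 //.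
  - by rewrite subrr.
  - by rewrite subrr add0r.
have hq1W : (q1 <= W)%MS.
  rewrite hq1; apply: (linD (lin_sub W)); last exact: linZ _ (lin_sub W) hE0.
  apply: (linB (lin_sub W)); last exact: linZ _ (lin_sub W) hE0.
  apply: (linB (lin_sub W)) => //; exact: linZ _ (lin_sub W) hfW.
have hq11 : lform q1 E0 = 0 by rewrite /q1 /E0 lform_mk !dotE; ring.
have hq12 : lform q1 f = 0 by rewrite /q1 /f lform_mk !dotE; ring.
have hpq := hort (p' *m gi) (q1 *m gi).
have hyb : dot b yv = 0.
  have := hpq; rewrite span_twist ggi spQ ggi => /(_ Pip' hq1W).
  rewrite lformgi => /(_ (orth_line _ hp1 hp2) (orth_line _ hq11 hq12)).
  by rewrite /p' /q1 lform_mk; lra.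
have hyv : yv != 0.
  apply/eqP => hy0; move/negP: hi; apply; apply/sub_mx2P.
  exists (wc r), (uc r).
  apply: ext5; rewrite /E0 /f !coordE ?sc0 ?mulr0 ?mulr1 ?add0r ?addr0 //.
  by apply/eqP; rewrite -subr_eq0; apply/eqP.
clearbody yv.
set q2 : 'rV[R]_5 := mk yv 0 0.
have hq2W : (q2 <= W)%MS.
  by rewrite (_ : q2 = q1) // /q2 /q1 dotC hyb mulr0.
have hs3 : (mxl 3 [:: E0; f; q2] <= W)%MS.
  by apply/row_subP => j; rewrite row_mxl; case: j => [[|[|[|//]]] Hj].
have hr3 : \rank (mxl 3 [:: E0; f; q2]) = 3%N.
  apply: rank_mx3 => c1 c2 c3 h0.
  have := congr1 (@uc R) h0; have := congr1 (@wc R) h0; have := congr1 (@ys R) h0.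
  rewrite /E0 /f /q2 !coordE ?sc0 ?scaler0 ?mulr0 ?mulr1 ?add0r ?addr0 => hy hw huu.
  move: hy; rewrite huu scale0r add0r => /eqP; rewrite scaler_eq0 (negbTE hyv) orbF => /eqP.
  by [].
have hWs : (W <= mxl 3 [:: E0; f; q2])%MS.
  by rewrite -(mxrank_leqif_sup hs3).2 hr3 hrW.
have WE : forall z, (z <= W)%MS <-> exists a1 a2 a3, z = a1 *: E0 + a2 *: f + a3 *: q2.
  move=> z; split => [hz | hz].
  - by apply/sub_mx3P; apply: submx_trans hWs.
  - by apply: submx_trans hs3; apply/sub_mx3P.
set M4 := mxl 4 [:: B0; q2; E1; E0].
set Hh := [set x | H4 x /\ (x *m g <= M4)%MS].
have hHne : exists x, Hh x.
  exists (k0 *m gi); split; [apply/H4gi; exact: H4_k0 | rewrite ggi; exact: k0_mx4].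
have spH : forall x, in_span Hh x <-> (x *m g <= M4)%MS := span_pre (erefl Hh) hHne.
set c := t * dot b b.
exists [set p | exists q, bmap g p q /\ (q = None \/ exists y, q = Some y /\ dot y b = c)].
exists (bdry Hh).
split; first by exists c.
split.
  exists Hh; split; last split => //.
  - apply: kplane_mk; last by exists k0; split; [exact: H4_k0 | exact: k0_mx4].
    apply: rank_mx4 => c1 c2 c3 c4 h0.
    have := congr1 (@uc R) h0; have := congr1 (@wc R) h0; have := congr1 (@ys R) h0.
    rewrite /E0 /E1 /B0 /q2 !coordE ?sc0 ?scaler0 ?mulr0 ?mulr1 ?add0r ?addr0 => hy hw huu.
    have h1 := congr1 (dot b) hy; have h2 := congr1 (dot yv) hy.
    move: h1 h2; rewrite !dotE hyb (dotC yv b) hyb !mulr0 ?addr0 ?add0r.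
    have hb2 := dot_gt0 hb; have hy2 := dot_gt0 hyv.
    move=> h1 h2; split => //.
    + by apply: (mulIf (lt0r_neq0 hb2)); rewrite mul0r.
    + by apply: (mulIf (lt0r_neq0 hy2)); rewrite mul0r.
  - move=> x; rewrite /P twistE => -[hx [mu hmu]]; split => //.
    apply/sub_mx4P; exists mu, 0, (uc (x *m g)), (wc (x *m g)).
    apply: ext5; rewrite /E0 /E1 /B0 /q2 !coordE ?sc0 ?scaler0 ?mulr0 ?mulr1 ?add0r ?addr0 //.
    by rewrite hmu scale0r addr0.
apply: funext => pp; apply: propext; rewrite /bdry /=.
rewrite spQ spH.
have hpen : (exists q, bmap g pp q /\ (q = None \/ exists y, q = Some y /\ dot y b = c)) <->
   dot (ys (bpt pp *m g)) b = c * uc (bpt pp *m g) := pencilE c pp.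
rewrite hpen WE sub_mx4P.
set n := bpt pp *m g.
split.
- move=> [a1 [a2 [a3 ->]]]; split.
  + rewrite /E0 /f /q2 !coordE ?sc0 ?scaler0 ?mulr0 ?mulr1 ?add0r ?addr0.
    rewrite !dotE (dotC yv b) hyb /c; ring.
  + exists (a2 * t), a3, a2, a1.
    apply: ext5; rewrite /E0 /E1 /B0 /f /q2 !coordE ?sc0 ?scaler0 ?mulr0 ?mulr1 ?add0r ?addr0 //.
    by rewrite scalerA.
- move=> [hc [c1 [c2 [c3 [c4 hn]]]]].
  have hb2 := dot_gt0 hb.
  move: hc; rewrite hn /E0 /E1 /B0 /q2 !coordE ?sc0 ?scaler0 ?mulr0 ?mulr1 ?add0r ?addr0.
  rewrite !dotE (dotC yv b) hyb mulr0 addr0 /c => hc.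
  have hc1 : c1 = c3 * t by apply: (mulIf (lt0r_neq0 hb2)); rewrite hc; ring.
  exists c4, c3, c2.
  apply: ext5; rewrite /E0 /E1 /B0 /f /q2 !coordE ?sc0 ?scaler0 ?mulr0 ?mulr1 ?add0r ?addr0 //.
  by rewrite hc1 scalerA.
Qed.

Lemma rank4 y : y != 0 -> dot b y = 0 ->
  \rank (mxl 4 [:: B0; mk y 0 0; E1; E0]) = 4%N.
Proof.
move=> hyv hyb; apply: rank_mx4 => c1 c2 c3 c4 h0.
have := congr1 (@uc R) h0; have := congr1 (@wc R) h0; have := congr1 (@ys R) h0.
rewrite /E0 /E1 /B0 !coordE ?sc0 ?scaler0 ?mulr0 ?mulr1 ?add0r ?addr0 => hy hw huu.
have h1 := congr1 (dot b) hy; have h2 := congr1 (dot y) hy.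
move: h1 h2; rewrite !dotE hyb (dotC y b) hyb !mulr0 ?addr0 ?add0r.
have hb2 := dot_gt0 hb; have hy2 := dot_gt0 hyv.
move=> h1 h2; split => //.
+ by apply: (mulIf (lt0r_neq0 hb2)); rewrite mul0r.
+ by apply: (mulIf (lt0r_neq0 hy2)); rewrite mul0r.
Qed.

Lemma scale_sub_inv m (M : 'M[R]_(m, 5)) (k : R) x : k != 0 -> (k *: x <= M)%MS -> (x <= M)%MS.
Proof.
by move=> hk h; rewrite -(scale1r x) -(mulVf hk) -scalerA scalemx_sub.
Qed.

Lemma backward (v : option 'rV[R]_3) (Q : set 'rV[R]_5) :
  bmap g v None -> is_plane Q -> half_turn_bank g A b (bdry Q) ->
  orth_through (twisting_plane g A) Q v.
Proof.
move=> hv [VQ [hrQ [hQ hQne]]] [s [tt [[c ->] [[Hh [[VH [hrH [hHe hHne]]] [hPH ->]]] hbd]]]].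
set P := twisting_plane g A.
set W := VQ *m g.
have hrW : \rank W = 3%N by rewrite rankg.
have spQ : forall x, in_span Q x <-> (x *m g <= W)%MS := fun x => in_span_g x hQ hQne.
set KH := VH *m g.
have hrK : \rank KH = 4%N by rewrite rankg.
have spH : forall x, in_span Hh x <-> (x *m g <= KH)%MS := fun x => in_span_g x hHe hHne.
have PiK : forall z, Pi z -> (z <= KH)%MS.
  move=> z hz; rewrite -(ggi z); apply/spH; apply: (in_spanS hPH).
  by apply/span_twist; rewrite ggi.
have : ~~ (KH <= mxl 3 [:: B0; E1; E0])%MS.
  apply/negP => hs; have := mxrankS hs; rewrite hrK.
  have := rank_leq_row (mxl 3 [:: B0; E1; E0]); lia.
move/row_subPn => [i hi].
set r := row i KH.
have hrK' : (r <= KH)%MS := row_sub i KH.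
have hb2 := dot_gt0 hb.
set kap := dot (ys r) b / dot b b.
set y1 := ys r - kap *: b.
have hy1b : dot b y1 = 0.
  rewrite /y1 !dotE (dotC b (ys r)) /kap; field; exact: lt0r_neq0.
have hy1 : y1 != 0.
  apply/eqP => hy0; move/negP: hi; apply; apply/PiE; exists kap.
  by apply/eqP; rewrite -subr_eq0; apply/eqP.
have hy1e : ys r = y1 + kap *: b by rewrite /y1 subrK.
clearbody y1.
set qv : 'rV[R]_5 := mk y1 0 0.
have PiB0 : Pi B0 by exists 1; rewrite /B0 ys_mk scale1r.
have PiE1 : Pi E1 by exists 0; rewrite /E1 ys_mk scale0r.
have PiE0 : Pi E0 by exists 0; rewrite /E0 ys_mk scale0r.
have hqK : (qv <= KH)%MS.
  have -> : qv = r - kap *: B0 - uc r *: E1 - wc r *: E0.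
    apply: ext5; rewrite /qv /B0 /E1 /E0 !coordE ?sc0 ?scaler0 ?mulr0 ?mulr1 ?subr0 //.
    - by rewrite hy1e addrK.
    - by rewrite subrr.
    - by rewrite subrr.
  have lK := lin_sub KH.
  apply: (linB lK); last exact: linZ _ lK (PiK _ PiE0).
  apply: (linB lK); last exact: linZ _ lK (PiK _ PiE1).
  apply: (linB lK) => //; exact: linZ _ lK (PiK _ PiB0).
have hs4 : (mxl 4 [:: B0; qv; E1; E0] <= KH)%MS.
  apply/row_subP => j; rewrite row_mxl; case: j => [[|[|[|[|//]]]] Hj] /=; first [exact: hqK | exact: PiK].
have hK4 : (KH <= mxl 4 [:: B0; qv; E1; E0])%MS.
  by rewrite -(mxrank_leqif_sup hs4).2 rank4 // hrK.
have KHE : forall z, (z <= KH)%MS <-> (z <= mxl 4 [:: B0; qv; E1; E0])%MS.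
  by move=> z; split => hz; [apply: submx_trans hK4 | apply: submx_trans hs4].
have BE : forall p, (bpt p *m g <= W)%MS <->
    dot (ys (bpt p *m g)) b = c * uc (bpt p *m g) /\ (bpt p *m g <= KH)%MS.
  move=> p; have := congr1 (fun S => S p) hbd; rewrite /bdry /= => e.
  rewrite -spQ -spH -(pencilE c p); by rewrite e.
set t0 := c / dot b b.
have hnull : forall q, dot (ys (bpt q)) b = c * uc (bpt q) -> (bpt q <= KH)%MS -> (bpt q <= W)%MS.
  move=> q h1 h2; have [p [k [hk he]]] := bmap_surj q.
  have hk0 := lt0r_neq0 hk.
  apply: (scale_sub_inv hk0); rewrite -he; apply/BE; rewrite he; split.
  - by rewrite ysZ ucZ dotZl h1 mulrCA.
  - exact: scalemx_sub.
have hb0 := lt0r_neq0 hb2.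
have hE0W : (E0 <= W)%MS.
  apply: (hnull None); first by rewrite /bpt !coordE !dot3 !mxE; ring.
  exact: PiK.
set N2 := bpt (Some (t0 *: b)).
set N3 := bpt (Some (t0 *: b + y1)).
have hN2 : (N2 <= W)%MS.
  apply: hnull; first by rewrite /bpt !coordE dotZl /t0 mulr1; field.
  by apply: PiK; exists t0; rewrite /bpt ys_mk.
have hN3 : (N3 <= W)%MS.
  apply: hnull; first by rewrite /bpt !coordE dotDl dotZl (dotC y1 b) hy1b addr0 /t0 mulr1; field.
  apply/KHE/sub_mx4P; exists t0, 1, 1, (wc N3).
  apply: ext5; rewrite /N3 /bpt /B0 /qv /E1 /E0 !coordE ?sc0 ?scaler0 ?mulr0 ?mulr1 ?addr0 ?add0r ?scale1r //.
set f : 'rV[R]_5 := mk (t0 *: b) 1 0.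
have hfW : (f <= W)%MS.
  have -> : f = N2 - wc N2 *: E0.
    apply: ext5; rewrite /f /N2 /bpt /E0 !coordE ?sc0 ?mulr0 ?mulr1 ?subr0 //.
    by rewrite subrr.
  apply: (linB (lin_sub W)) => //; exact: linZ _ (lin_sub W) hE0W.
have hqW : (qv <= W)%MS.
  have -> : qv = N3 - N2 - (wc N3 - wc N2) *: E0.
    apply: ext5; rewrite /qv /N3 /N2 /bpt /E0 !coordE ?sc0 ?mulr0 ?mulr1 ?subr0 //.
    - by rewrite addrC addKr.
    - by rewrite subrr.
    - by rewrite subrr.
  apply: (linB (lin_sub W)); last exact: linZ _ (lin_sub W) hE0W.
  exact: (linB (lin_sub W)).
have hs3 : (mxl 3 [:: E0; f; qv] <= W)%MS.
  by apply/row_subP => j; rewrite row_mxl; case: j => [[|[|[|//]]] Hj].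
have hr3 : \rank (mxl 3 [:: E0; f; qv]) = 3%N.
  apply: rank_mx3 => c1 c2 c3 h0.
  have := congr1 (@uc R) h0; have := congr1 (@wc R) h0; have := congr1 (@ys R) h0.
  rewrite /E0 /f /qv !coordE ?sc0 ?scaler0 ?mulr0 ?mulr1 ?add0r ?addr0 => hy hw huu.
  move: hy; rewrite huu scale0r add0r => /eqP; rewrite scaler_eq0 (negbTE hy1) orbF => /eqP.
  by [].
have hWs : (W <= mxl 3 [:: E0; f; qv])%MS.
  by rewrite -(mxrank_leqif_sup hs3).2 hr3 hrW.
have WE : forall z, (z <= W)%MS <-> exists a1 a2 a3, z = a1 *: E0 + a2 *: f + a3 *: qv.
  move=> z; split => [hz | hz].
  - by apply/sub_mx3P; apply: submx_trans hWs.
  - by apply: submx_trans hs3; apply/sub_mx3P.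
have hy12 := dot_gt0 hy1.
have PWE : forall z, Pi z /\ (z <= W)%MS <-> (z <= mxl 2 [:: E0; f])%MS.
  move=> z; rewrite sub_mx2P WE; split.
  - move=> [[mu hmu] [a1 [a2 [a3 hz]]]]; exists a1, a2.
    have : ys z = ys z by [].
    rewrite {1}hmu {1}hz /E0 /f /qv !coordE ?sc0 ?scaler0 ?mulr0 ?mulr1 ?add0r ?addr0.
    move/(congr1 (dot y1)); rewrite !dotE (dotC y1 b) hy1b !mulr0 add0r => ha3.
    have ha30 : a3 = 0.
      by apply: (mulIf (lt0r_neq0 hy12)); rewrite mul0r -ha3.
    by rewrite hz ha30 scale0r addr0.
  - move=> [a1 [a2 hz]]; split.
    + exists (a2 * t0); rewrite hz /E0 /f !coordE ?sc0 ?add0r.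
      by rewrite scalerA.
    + by exists a1, a2, 0; rewrite scale0r addr0.
have PQE : P `&` Q = [set x | H4 x /\ (x *m g <= mxl 2 [:: E0; f])%MS].
  apply: funext => x; apply: propext; rewrite /P twistE hQ /=.
  split.
  - move=> [[h1 h2] [_ h4]]; split => //; apply/PWE; split => //; by rewrite -subg.
  - move=> [h1 h2]; move/PWE: h2 => [h2 h3]; split; split => //; by rewrite subg.
set T := t0 ^+ 2 * dot b b.
set w1 : R := (T + 1) / 2.
set w2 : R := T + 1 / 4.
set z1 : 'rV[R]_5 := mk (t0 *: b) 1 w1.
set z2 : 'rV[R]_5 := mk ((2 * t0) *: b) 2 w2.
have hz1 : H4 z1.
  split; last by rewrite /z1 uc_mk ltr01.
  by rewrite /z1 lform_mk !dotE /w1 /T; field.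
have hz2 : H4 z2.
  split; last by rewrite /z2 uc_mk ltr0n.
  by rewrite /z2 lform_mk !dotE /w2 /T; field.
have hz1s : (z1 <= mxl 2 [:: E0; f])%MS.
  apply/sub_mx2P; exists w1, 1; apply: ext5;
    rewrite /z1 /E0 /f !coordE ?sc0 ?mulr0 ?mulr1 ?add0r ?addr0 ?scale1r //.
have hz2s : (z2 <= mxl 2 [:: E0; f])%MS.
  apply/sub_mx2P; exists w2, 2; apply: ext5;
    rewrite /z2 /E0 /f !coordE ?sc0 ?mulr0 ?mulr1 ?add0r ?addr0 //.
  by rewrite scalerA mulrC.
have hPQne : exists x, (P `&` Q) x.
  by exists (z1 *m gi); rewrite PQE /=; split; [apply/H4gi | rewrite ggi].
have spPQ : forall x, in_span (P `&` Q) x <-> (x *m g <= mxl 2 [:: E0; f])%MS.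
  exact: span_pre PQE hPQne.
split.
  rewrite PQE; apply: kplane_mk; last by exists z1.
  apply: rank_mx2 => c1 c2 h0.
  have := congr1 (@uc R) h0; have := congr1 (@wc R) h0.
  rewrite /E0 /f !coordE ?mulr0 ?mulr1 ?add0r ?addr0 => hw huu.
  by split.
split.
  apply/spPQ; case: hv => k [hk ->]; apply/sub_mx2P; exists k, 0.
  by rewrite scale0r addr0.
move=> pp qq hp hq hpo hqo.
have hz1PQ : (P `&` Q) (z1 *m gi) by rewrite PQE /=; split; [apply/H4gi | rewrite ggi].
have hz2PQ : (P `&` Q) (z2 *m gi) by rewrite PQE /=; split; [apply/H4gi | rewrite ggi].
have ep1 : lform (pp *m g) z1 = 0 by rewrite -(ggi z1) lformg; exact: hpo _ hz1PQ.
have ep2 : lform (pp *m g) z2 = 0 by rewrite -(ggi z2) lformg; exact: hpo _ hz2PQ.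
have eq1 : lform (qq *m g) z1 = 0 by rewrite -(ggi z1) lformg; exact: hqo _ hz1PQ.
have eq2 : lform (qq *m g) z2 = 0 by rewrite -(ggi z2) lformg; exact: hqo _ hz2PQ.
rewrite -lformg.
move/span_twist: hp => [lam hlam].
move/spQ/WE: hq => [a1 [a2 [a3 hqe]]].
move: ep1 ep2 eq1 eq2; rewrite hqe /lform hlam /z1 /z2 /E0 /f /qv !coordE ?sc0 ?mulr0 ?mulr1 ?add0r ?addr0.
rewrite !dotE (dotC y1 b) hy1b ?mulr0 ?addr0 ?add0r.
set u := uc (pp *m g); set w := wc (pp *m g).
move=> ep1 ep2 eq1 eq2.
have hw : w2 - 2 * w1 = - (3 / 4) by rewrite /w2 /w1; lra.
have hw0 : w2 - 2 * w1 != 0 by rewrite hw; apply: ltr0_neq0; lra.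
have hu0 : u * (w2 - 2 * w1) = 0.
  have -> : u * (w2 - 2 * w1) = 2 * (lam * (t0 * dot b b) - u * w1 - w) -
      (lam * (2 * t0 * dot b b) - u * w2 - w * 2) by ring.
  by rewrite ep1 ep2; ring.
have ha2 : a2 * (w2 - 2 * w1) = 0.
  have -> : a2 * (w2 - 2 * w1) = 2 * (a2 * (t0 * (t0 * dot b b)) - a2 * w1 - a1) -
      (a2 * (t0 * (2 * t0 * dot b b)) - a2 * w2 - a1 * 2) by ring.
  by rewrite eq1 eq2; ring.
move/eqP: hu0; rewrite mulf_eq0 (negbTE hw0) orbF => /eqP hu0.
move/eqP: ha2; rewrite mulf_eq0 (negbTE hw0) orbF => /eqP ha2.
have ha1 : a1 = 0 by move: eq1; rewrite ha2; lra.
by rewrite hu0 ha1 ha2; ring.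
Qed.
End Main.

Theorem theorem5p10 (R : realType) (gamma g : 'M[R]_5) (A : 'M[R]_3)
    (b : 'rV[R]_3) (v : option 'rV[R]_3) :
  screw_normal_form gamma g A b v ->
  forall Q : set 'rV[R]_5, is_plane Q ->
    (orth_through (twisting_plane g A) Q v <->
     half_turn_bank g A b (bdry Q)).
Proof.
move=> [_ [hg [[hA hdet] [hA1 [[hbA hb] [hv _]]]]]] Q hQ.
split.
- exact: (forward hg hA hdet hA1 hbA hb hv hQ).
- exact: (backward hg hA hdet hA1 hbA hb hv hQ).
Qed.
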